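(* Let $(W,S)$ be a Coxeter system with $S$ finite and $\phi:\operatorname{Ad}(Q_W)\to W$ the homomorphism $e_x\mapsto x$. Then $\phi$ restricts to an isomorphism $[\operatorname{Ad}(Q_W),\operatorname{Ad}(Q_W)]\xrightarrow{\cong}[W,W]$ of commutator subgroups.
   Context: A Coxeter system $(W,S)$: $S$ finite, $m:S\times S\to\mathbb{N}\cup\{\infty\}$ with $m(s,s)=1$, $2\le m(s,t)=m(t,s)\le\infty$ for $s\ne t$, $W=\langle s\in S\mid (st)^{m(s,t)}=1\ (m(s,t)<\infty)\rangle$. The Coxeter quandle $Q_W=\bigcup_{w\in W}w^{-1}Sw$ has operation $x\ast y=yxy$, and $\operatorname{Ad}(Q_W)=\langle e_x\ (x\in Q_W)\mid e_y^{-1}e_xe_y=e_{x\ast y}\ (x,y\in Q_W)\rangle$. *)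

(* Defs.v *)
From mathcomp Require Import all_boot.
Set Implicit Arguments. Unset Strict Implicit. Unset Printing Implicit Defensive.

Record group := Group {
  carrier :> Type;
  gmul : carrier -> carrier -> carrier;
  gone : carrier;
  ginv : carrier -> carrier;
  gmulA : forall x y z, gmul x (gmul y z) = gmul (gmul x y) z;
  gmul1 : forall x, gmul gone x = x;
  gmulV : forall x, gmul (ginv x) x = gone
}.
Arguments gmul {g}. Arguments gone {g}. Arguments ginv {g}.

Fixpoint gpow (G : group) (x : G) (n : nat) : G :=
  match n with 0 => gone | n'.+1 => gmul x (gpow x n') end.

Definition is_hom (G H : group) (f : G -> H) : Prop :=
  forall x y, f (gmul x y) = gmul (f x) (f y).

Definition gcomm (G : group) (a b : G) : G :=
  gmul (gmul (ginv a) (ginv b)) (gmul a b).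

(* The commutator subgroup [G,G]: the subgroup generated by all commutators.
   Since [a,b]^-1 = [b,a], it consists of finite products of commutators. *)
Inductive in_commutator (G : group) : G -> Prop :=
| comm_one : in_commutator gone
| comm_mul a b g : in_commutator g -> in_commutator (gmul (gcomm a b) g).

(* Coxeter matrix on a finite set S; None encodes m(s,t) = infinity. *)
Definition coxeter_matrix (S : finType) (m : S -> S -> option nat) : Prop :=
  (forall s, m s s = Some 1) /\ (forall s t, m s t = m t s) /\
  (forall s t, s <> t -> match m s t with Some k => 2 <= k | None => true end).

Definition coxeter_rels (S : finType) (m : S -> S -> option nat) (G : group)
  (f : S -> G) : Prop :=
  forall s t k, m s t = Some k -> gpow (gmul (f s) (f t)) k = gone.

Definition is_coxeter_group (S : finType) (m : S -> S -> option nat)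
  (W : group) (sgen : S -> W) : Prop :=
  coxeter_matrix m /\ coxeter_rels m sgen /\
  forall (H : group) (f : S -> H), coxeter_rels m f ->
    exists h : W -> H, is_hom h /\ (forall s, h (sgen s) = f s) /\
      forall h' : W -> H, is_hom h' -> (forall s, h' (sgen s) = f s) ->
        forall x, h' x = h x.

Definition in_QW (S : finType) (W : group) (sgen : S -> W) (x : W) : Prop :=
  exists (w : W) (s : S), x = gmul (gmul (ginv w) (sgen s)) w.

Definition QW (S : finType) (W : group) (sgen : S -> W) :=
  {x : W | in_QW sgen x}.

Definition qop_rel (S : finType) (W : group) (sgen : S -> W)
  (x y z : QW sgen) : Prop :=
  proj1_sig z = gmul (gmul (proj1_sig y) (proj1_sig x)) (proj1_sig y).

Definition adjoint_rels (S : finType) (W : group) (sgen : S -> W)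
  (H : group) (f : QW sgen -> H) : Prop :=
  forall x y z : QW sgen, qop_rel x y z ->
    gmul (gmul (ginv (f y)) (f x)) (f y) = f z.

Definition is_adjoint_group (S : finType) (W : group) (sgen : S -> W)
  (A : group) (e : QW sgen -> A) : Prop :=
  adjoint_rels e /\
  forall (H : group) (f : QW sgen -> H), adjoint_rels f ->
    exists h : A -> H, is_hom h /\ (forall x, h (e x) = f x) /\
      forall h' : A -> H, is_hom h' -> (forall x, h' (e x) = f x) ->
        forall a, h' a = h a.

(* Main.v *)
Require Import Defs.
From mathcomp Require Import all_boot.
From mathcomp Require Import ssralg ssrint zify.
From Stdlib Require Import ProofIrrelevance FunctionalExtensionality PropExtensionality ClassicalEpsilon.
Set Implicit Arguments. Unset Strict Implicit. Unset Printing Implicit Defensive.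

Local Notation "x ** y" := (gmul x y) (at level 40, left associativity).

Section GL.
Variable G : group.
Implicit Types x y z : G.
Lemma mulKg x y : ginv x ** (x ** y) = y.
Proof. by rewrite gmulA gmulV gmul1. Qed.
Lemma mulgV x : x ** ginv x = gone.
Proof.
have h : ginv (ginv x) ** ginv x = gone by apply: gmulV.
by rewrite -[x ** _]gmul1 -h -gmulA [ginv x ** _]gmulA gmulV gmul1 h.
Qed.
Lemma mulg1 x : x ** gone = x.
Proof. by rewrite -(gmulV x) gmulA mulgV gmul1. Qed.
Lemma mulVKg x y : x ** (ginv x ** y) = y.
Proof. by rewrite gmulA mulgV gmul1. Qed.
Lemma mulgK x y : y ** x ** ginv x = y.
Proof. by rewrite -gmulA mulgV mulg1. Qed.
Lemma mulgVK x y : y ** ginv x ** x = y.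
Proof. by rewrite -gmulA gmulV mulg1. Qed.
Lemma inv_left x y : y ** x = gone -> y = ginv x.
Proof. by move=> h; rewrite -(mulgK x y) h gmul1. Qed.
Lemma inv_right x y : x ** y = gone -> y = ginv x.
Proof. by move=> h; rewrite -(mulKg x y) h mulg1. Qed.
Lemma invK x : ginv (ginv x) = x.
Proof. by symmetry; apply: inv_left; rewrite mulgV. Qed.
Lemma invM x y : ginv (x ** y) = ginv y ** ginv x.
Proof. by symmetry; apply: inv_left; rewrite -gmulA mulKg gmulV. Qed.
Lemma inv1 : ginv (@gone G) = gone.
Proof. by symmetry; apply: inv_left; rewrite gmul1. Qed.
Lemma mulg_injl x y z : x ** y = x ** z -> y = z.
Proof. by move=> h; rewrite -(mulKg x y) h mulKg. Qed.
Lemma mulg_injr x y z : y ** x = z ** x -> y = z.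
Proof. by move=> h; rewrite -(mulgK x y) h mulgK. Qed.
Lemma gpowS_r x n : gpow x n.+1 = gpow x n ** x.
Proof. elim: n => [|n IH]; first by rewrite /= mulg1 gmul1.
change (x ** gpow x n.+1 = (x ** gpow x n) ** x). by rewrite IH gmulA. Qed.
Lemma gpowD x n k : gpow x (n + k) = gpow x n ** gpow x k.
Proof. elim: n => [|n IH] /=; first by rewrite gmul1. by rewrite IH gmulA. Qed.
End GL.

Section Hom.
Variables (G H : group) (f : G -> H) (hf : is_hom f).
Lemma hom1 : f gone = gone.
Proof. apply: (@mulg_injl _ (f gone)). by rewrite -hf !mulg1. Qed.
Lemma homV x : f (ginv x) = ginv (f x).
Proof. apply: inv_left. by rewrite -hf gmulV hom1. Qed.
Lemma hom_pow x n : f (gpow x n) = gpow (f x) n.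
Proof. elim: n => [|n IH] /=; first exact: hom1. by rewrite hf IH. Qed.
End Hom.

Lemma sig_eqP (T : Type) (Q : T -> Prop) (a b : {x | Q x}) :
  proj1_sig a = proj1_sig b -> a = b.
Proof. case: a => a pa; case: b => b pb /= e; subst b. by rewrite (proof_irrelevance _ pa pb). Qed.

Section Sub.
Variables (G : group) (P : G -> Prop) (P1 : P gone)
  (PM : forall x y, P x -> P y -> P (x ** y)) (PV : forall x, P x -> P (ginv x)).
Definition subg : group.
refine (@Defs.Group {x | P x} (fun a b => exist _ _ (PM (proj2_sig a) (proj2_sig b)))
   (exist _ gone P1) (fun a => exist _ _ (PV (proj2_sig a))) _ _ _).
- by move=> x y z; apply: sig_eqP => /=; rewrite gmulA.
- by move=> x; apply: sig_eqP => /=; rewrite gmul1.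
- by move=> x; apply: sig_eqP => /=; rewrite gmulV.
Defined.
Lemma subg_pow (x : subg) n : proj1_sig (gpow x n) = gpow (proj1_sig x) n.
Proof. by elim: n => [|n IH] //=; rewrite IH. Qed.
Lemma subg_incl_hom : is_hom (fun x : subg => proj1_sig x).
Proof. by []. Qed.
End Sub.

Inductive gen_by (G : group) (I : Type) (g : I -> G) : G -> Prop :=
| gb1 : gen_by g gone
| gbl i a : gen_by g a -> gen_by g (g i ** a)
| gbli i a : gen_by g a -> gen_by g (ginv (g i) ** a).

Lemma gen_by_mul (G : group) I (g : I -> G) a b : gen_by g a -> gen_by g b -> gen_by g (a ** b).
Proof.
elim=> [|i a' _ IH|i a' _ IH] hb; first by rewrite gmul1.
- by rewrite -gmulA; apply: gbl; apply: IH.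
- by rewrite -gmulA; apply: gbli; apply: IH.
Qed.
Lemma gen_by_g (G : group) I (g : I -> G) i : gen_by g (g i).
Proof. by rewrite -(mulg1 (g i)); apply: gbl; apply: gb1. Qed.
Lemma gen_by_gV (G : group) I (g : I -> G) i : gen_by g (ginv (g i)).
Proof. by rewrite -(mulg1 (ginv (g i))); apply: gbli; apply: gb1. Qed.
Lemma gen_by_inv (G : group) I (g : I -> G) a : gen_by g a -> gen_by g (ginv a).
Proof.
elim=> [|i a' _ IH|i a' _ IH]; first by rewrite inv1; apply: gb1.
- by rewrite invM; apply: gen_by_mul => //; apply: gen_by_gV.
- by rewrite invM invK; apply: gen_by_mul => //; apply: gen_by_g.
Qed.

Section Quot.
Variables (G : group) (N : G -> Prop) (N1 : N gone)
  (NM : forall x y, N x -> N y -> N (x ** y)) (NV : forall x, N x -> N (ginv x))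
  (Nc : forall n g, N n -> n ** g = g ** n).
Definition qrel (a b : G) := N (ginv a ** b).
Definition qcar := {P : G -> Prop | exists a, P = qrel a}.
Definition cls (a : G) : qcar := exist _ (qrel a) (ex_intro _ a erefl).
Definition rep (q : qcar) : G := proj1_sig (constructive_indefinite_description _ (proj2_sig q)).
Lemma cls_rep q : cls (rep q) = q.
Proof.
rewrite /rep; case: (constructive_indefinite_description _ _) => a /= ha.
by apply: sig_eqP => /=; rewrite ha.
Qed.
Lemma cls_eq a b : N (ginv a ** b) -> cls a = cls b.
Proof.
move=> hab; apply: sig_eqP => /=; apply: functional_extensionality => c.
apply: propositional_extensionality; rewrite /qrel; split => h.
- have -> : ginv b ** c = ginv (ginv a ** b) ** (ginv a ** c) by rewrite invM invK -gmulA mulVKg.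
  by apply: NM => //; apply: NV.
- have -> : ginv a ** c = (ginv a ** b) ** (ginv b ** c) by rewrite -gmulA mulVKg.
  by apply: NM.
Qed.
Lemma cls_eqP a b : cls a = cls b -> N (ginv a ** b).
Proof.
move=> h; have := f_equal (fun q => proj1_sig q b) h; rewrite /= /qrel => ->.
by rewrite gmulV.
Qed.
Lemma rep_cls a : N (ginv (rep (cls a)) ** a).
Proof. by apply: cls_eqP; rewrite cls_rep. Qed.
Definition qmul (p q : qcar) := cls (rep p ** rep q).
Definition qinv (p : qcar) := cls (ginv (rep p)).
Lemma qmulE a b : qmul (cls a) (cls b) = cls (a ** b).
Proof.
rewrite /qmul; apply: cls_eq.
set a' := rep (cls a); set b' := rep (cls b).
have ha : N (ginv a' ** a) by apply: rep_cls.
have hb : N (ginv b' ** b) by apply: rep_cls.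
have -> : ginv (a' ** b') ** (a ** b) = (ginv b' ** ((ginv a' ** a) ** b')) ** (ginv b' ** b).
  by rewrite invM !gmulA mulgK.
apply: NM => //. by rewrite (Nc _ ha) mulKg.
Qed.
Lemma qinvE a : qinv (cls a) = cls (ginv a).
Proof.
rewrite /qinv; apply: cls_eq.
set a' := rep (cls a).
have ha : N (ginv a' ** a) by apply: rep_cls.
rewrite invK.
have -> : a' ** ginv a = a' ** ginv (ginv a' ** a) ** ginv a'.
  by rewrite invM invK !gmulA mulgK.
by rewrite -(Nc _ (NV ha)) mulgK; apply: NV.
Qed.
Lemma qall (P : qcar -> Prop) : (forall a, P (cls a)) -> forall q, P q.
Proof. by move=> h q; rewrite -(cls_rep q). Qed.
Definition quot : group.
refine (@Defs.Group qcar qmul (cls gone) qinv _ _ _).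
- apply: qall => a; apply: qall => b; apply: qall => c.
  by rewrite !qmulE gmulA.
- by apply: qall => a; rewrite qmulE gmul1.
- by apply: qall => a; rewrite qinvE qmulE gmulV.
Defined.
Lemma cls_hom : is_hom (cls : G -> quot).
Proof. by move=> x y /=; rewrite qmulE. Qed.
Lemma cls1P a : (cls a = (gone : quot)) -> N a.
Proof. move=> /= h; have := cls_eqP h.
by move/NV; rewrite invM inv1 gmul1 invK. Qed.
Lemma clsN a : N a -> cls a = (gone : quot).
Proof. move=> h /=; symmetry; apply: cls_eq. by rewrite inv1 gmul1. Qed.
End Quot.


Definition zfun (T : Type) : group.
refine (@Defs.Group (T -> int) (fun f g t => (f t + g t)%R) (fun _ => 0%R) (fun f t => (- f t)%R) _ _ _).
- by move=> x y z; apply: functional_extensionality => t; lia.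
- by move=> x; apply: functional_extensionality => t; lia.
- by move=> x; apply: functional_extensionality => t; lia.
Defined.

Lemma zfun_pow T (f : zfun T) n t : (gpow f n : T -> int) t = (f t * Posz n)%R.
Proof. elim: n => [|n IH] /=; first by lia. rewrite IH; lia. Qed.

Definition central (G : group) (a : G) := forall b, a ** b = b ** a.

Lemma comm_inv (G : group) (a x : G) : a ** x = x ** a -> a ** ginv x = ginv x ** a.
Proof. move=> h; apply: (@mulg_injl _ x); by rewrite gmulA -h -gmulA mulgV mulg1 mulVKg. Qed.
Lemma central_inv (G : group) (a : G) : central a -> central (ginv a).
Proof. move=> h b; symmetry; apply: comm_inv; symmetry; exact: h. Qed.
Lemma central_mul (G : group) (a b : G) : central a -> central b -> central (a ** b).
Proof. by move=> ha hb c; rewrite -gmulA hb gmulA ha gmulA. Qed.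
Lemma central1 (G : group) : central (@gone G).
Proof. by move=> b; rewrite gmul1 mulg1. Qed.
Lemma central_pow (G : group) (a : G) n : central a -> central (gpow a n).
Proof. move=> h; elim: n => [|n IH] /=; [exact: central1 | exact: central_mul]. Qed.
Lemma central_gen (G : group) I (g : I -> G) a : (forall i, a ** g i = g i ** a) ->
  forall b, gen_by g b -> a ** b = b ** a.
Proof.
move=> h b; elim=> [|i b' _ IH|i b' _ IH]; first by rewrite gmul1 mulg1.
- by rewrite gmulA h -gmulA IH gmulA.
- by rewrite gmulA comm_inv // -gmulA IH gmulA.
Qed.
Lemma pow_swap (G : group) (a b : G) j : b ** gpow (a ** b) j = gpow (b ** a) j ** b.
Proof.
elim: j => [|j IH] /=; first by rewrite gmul1 mulg1.
by rewrite -[RHS]gmulA -IH !gmulA.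
Qed.

Definition pb (P : Prop) : bool := if excluded_middle_informative P then true else false.
Lemma pbP (P : Prop) : pb P = true <-> P.
Proof. by rewrite /pb; case: excluded_middle_informative. Qed.
Lemma pb_ext (P Q : Prop) : (P <-> Q) -> pb P = pb Q.
Proof. move=> h; rewrite /pb; case: excluded_middle_informative => hp; case: excluded_middle_informative => hq //; exfalso; tauto. Qed.

Section Main.
Variables (S : finType) (m : S -> S -> option nat) (W : group) (sgen : S -> W)
  (A : group) (e : QW sgen -> A) (phi : A -> W).
Hypotheses (HW : is_coxeter_group m sgen) (HA : is_adjoint_group e)
  (Hphi : is_hom phi) (Hpe : forall x, phi (e x) = proj1_sig x).

Local Notation Q := (QW sgen).
Local Notation pr := (@proj1_sig W (in_QW sgen)).

Lemma sinv s : sgen s ** sgen s = gone.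
Proof. case: HW => [[Hss _] [Hrel _]]. have := Hrel s s 1 (Hss s). by rewrite /= mulg1. Qed.
Lemma sinvV s : ginv (sgen s) = sgen s.
Proof. by symmetry; apply: inv_right; apply: sinv. Qed.
Lemma qinvol (x : Q) : pr x ** pr x = gone.
Proof.
case: x => x [w [s hx]] /=; rewrite hx.
by rewrite !gmulA mulgK -(gmulA (ginv w)) sinv mulg1 gmulV.
Qed.
Lemma qinvV (x : Q) : ginv (pr x) = pr x.
Proof. by symmetry; apply: inv_right; apply: qinvol. Qed.
Lemma QW_eq (x y : Q) : pr x = pr y -> x = y.
Proof. exact: sig_eqP. Qed.

Lemma qstar_proof (x y : Q) : in_QW sgen (pr y ** pr x ** pr y).
Proof.
case: x => x [v [s hx]] /=; rewrite hx. exists (v ** pr y), s.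
by rewrite invM qinvV !gmulA.
Qed.
Definition qstar (x y : Q) : Q := exist _ (pr y ** pr x ** pr y) (qstar_proof x y).
Lemma qstarK x y : qstar (qstar x y) y = x.
Proof. apply: QW_eq => /=. by rewrite !gmulA qinvol gmul1 -gmulA qinvol mulg1. Qed.
Lemma sQ_proof s : in_QW sgen (sgen s).
Proof. exists gone, s. by rewrite inv1 gmul1 mulg1. Qed.
Definition sQ s : Q := exist _ (sgen s) (sQ_proof s).

Lemma econj x y : ginv (e y) ** e x ** e y = e (qstar x y).
Proof. by case: HA => h _; apply: h. Qed.

Lemma genW w : gen_by sgen w.
Proof.
case: HW => _ [Hrel Huniv].
pose sub := subg (gb1 sgen) (@gen_by_mul _ _ sgen) (@gen_by_inv _ _ sgen).
pose f s : sub := exist _ (sgen s) (gen_by_g sgen s).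
have Hf : coxeter_rels m f.
  move=> s t k hk; apply: sig_eqP; rewrite subg_pow /=; exact: Hrel.
have [h [hh [he _]]] := Huniv sub f Hf.
have [h0 [_ [_ hu]]] := Huniv W sgen Hrel.
have e1 := hu id (fun x y => erefl) (fun s => erefl) w.
have e2 := hu (fun a => proj1_sig (h a)) (fun x y => f_equal _ (hh x y))
   (fun s => f_equal _ (he s)) w.
have -> : w = proj1_sig (h w) by rewrite e2 -e1.
exact: proj2_sig.
Qed.

Lemma genA a : gen_by e a.
Proof.
case: HA => Hrel Huniv.
pose sub := subg (gb1 e) (@gen_by_mul _ _ e) (@gen_by_inv _ _ e).
pose f x : sub := exist _ (e x) (gen_by_g e x).
have Hf : adjoint_rels f.
  move=> x y z hz; apply: sig_eqP => /=; exact: Hrel.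
have [h [hh [he _]]] := Huniv sub f Hf.
have [h0 [_ [_ hu]]] := Huniv A e Hrel.
have e1 := hu id (fun x y => erefl) (fun s => erefl) a.
have e2 := hu (fun a => proj1_sig (h a)) (fun x y => f_equal _ (hh x y))
   (fun s => f_equal _ (he s)) a.
have -> : a = proj1_sig (h a) by rewrite e2 -e1.
exact: proj2_sig.
Qed.

Definition sq x := e x ** e x.

Lemma sq_comm_e x y : sq x ** e y = e y ** sq x.
Proof.
have h : ginv (e x) ** (ginv (e x) ** e y ** e x) ** e x = e y.
  by rewrite econj econj qstarK.
rewrite /sq -{1}h !gmulA mulgK mulgV gmul1.
by [].

Qed.
Lemma sq_central x : central (sq x).
Proof. move=> b; apply: central_gen (genA b) => i; exact: sq_comm_e. Qed.

Lemma sq_qstar y t : sq (qstar y t) = sq y.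
Proof.
rewrite /sq -econj !gmulA mulgK -(gmulA (ginv (e t)) (e y) (e y)) -/(sq y).
by rewrite -(sq_central y (ginv (e t))) mulgVK.
Qed.

Lemma sq_conj w : gen_by sgen w -> forall y z : Q, pr z = ginv w ** pr y ** w -> sq z = sq y.
Proof.
elim=> [|i a _ IH|i a _ IH] y z hz.
- by rewrite inv1 gmul1 mulg1 in hz; rewrite (QW_eq hz).
- rewrite (IH (qstar y (sQ i)) z) ?sq_qstar // hz /= invM sinvV !gmulA //.
- rewrite sinvV in hz.
  rewrite (IH (qstar y (sQ i)) z) ?sq_qstar // hz /= invM sinvV !gmulA //.
Qed.

Definition conjW (a b : W) := exists w, b = ginv w ** a ** w.
Lemma conjW_sym a b : conjW a b -> conjW b a.
Proof. case=> w ->; exists (ginv w). by rewrite invK !gmulA mulgK mulgV gmul1. Qed.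
Lemma conjW_trans a b c : conjW a b -> conjW b c -> conjW a c.
Proof. case=> w ->; case=> v ->; exists (w ** v). by rewrite invM !gmulA. Qed.

Definition rho (x : Q) : option S := [pick s | pb (conjW (sgen s) (pr x))].
Lemma rho_some x : exists s, rho x = Some s /\ conjW (sgen s) (pr x).
Proof.
rewrite /rho; case: pickP => [s hs | h].
- by exists s; split => //; apply/pbP.
- exfalso; case: (proj2_sig x) => w [s hx].
  have := h s; rewrite (_ : pb _ = true) //; apply/pbP; by exists w.
Qed.
Lemma rho_eq x y : conjW (pr x) (pr y) -> rho x = rho y.
Proof.
move=> hxy; apply: eq_pick => s /=; apply: pb_ext; split => h.
- exact: conjW_trans h hxy.
- exact: conjW_trans h (conjW_sym hxy).
Qed.
Lemma sq_rho x r : rho x = Some r -> sq x = sq (sQ r).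
Proof.
have [s [hs [w hw]]] := rho_some x. rewrite hs => -[<-].
exact: sq_conj (genW w) (sQ s) x hw.
Qed.
Lemma rho_rep x r : rho x = Some r -> rho (sQ r) = Some r.
Proof.
have [s [hs hw]] := rho_some x. rewrite hs => -[<-].
by rewrite -hs; apply: rho_eq.
Qed.


Definition fl (x : Q) : zfun S := fun t => if rho x == Some t then 1%R else 0%R.

Lemma fl_rels : adjoint_rels fl.
Proof.
move=> x y z hz.
have -> : fl z = fl x.
  rewrite /fl (@rho_eq x z) //; exists (pr y). by rewrite hz qinvV.
apply: functional_extensionality => t /=; lia.
Qed.

Definition lam_ex := proj2 HA (zfun S) fl fl_rels.
Definition lam : A -> zfun S := proj1_sig (constructive_indefinite_description _ lam_ex).
Lemma lam_hom : is_hom lam.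
Proof. rewrite /lam; case: constructive_indefinite_description => h [hh _] //. Qed.
Lemma lam_e x : lam (e x) = fl x.
Proof. rewrite /lam; case: constructive_indefinite_description => h [_ [he _]] //. Qed.

Lemma lam_comm c : in_commutator c -> lam c = gone.
Proof.
elim=> [|a b g _ IH]; first exact: hom1 lam_hom.
rewrite /gcomm !lam_hom !(homV lam_hom) IH.
apply: functional_extensionality => t /=; lia.
Qed.

Definition Pl (l : seq S) (c : S -> nat) : A :=
  foldr (fun s acc => gpow (sq (sQ s)) (c s) ** acc) gone l.

Lemma Pl_central l c : central (Pl l c).
Proof.
elim: l => [|s l IH] /=; first exact: central1.
apply: central_mul => //; apply: central_pow; exact: sq_central.
Qed.
Lemma PlD l c d : Pl l (fun s => c s + d s) = Pl l c ** Pl l d.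
Proof.
elim: l => [|s l IH] /=; first by rewrite gmul1.
rewrite IH gpowD -!gmulA; congr (_ ** _).
by rewrite !gmulA (central_pow (d s) (sq_central (sQ s)) (Pl l c)).
Qed.
Lemma Pl_ext l c d : (forall s, s \in l -> c s = d s) -> Pl l c = Pl l d.
Proof.
elim: l => [|s l IH] //= h.
rewrite h ?mem_head // IH // => t ht; apply: h; by rewrite in_cons ht orbT.
Qed.
Lemma Pl0 l : Pl l (fun _ => 0) = gone.
Proof. by elim: l => [|s l IH] //=; rewrite IH gmul1. Qed.
Lemma Pl_delta l r : r \in l -> uniq l -> Pl l (fun s => nat_of_bool (s == r)) = sq (sQ r).
Proof.
elim: l => [|s l IH] //=; rewrite in_cons => /orP hr /andP [hs hu].
case: eqP => [esr|ne] /=.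
- subst s; rewrite mulg1 (@Pl_ext _ _ (fun _ => 0)) ?Pl0 ?mulg1 // => t ht.
  case: eqP => // et; subst t; by rewrite ht in hs.
- rewrite gmul1 IH //. case: hr => // /eqP ?; subst; by case: ne.
Qed.

Lemma lam_sq s : rho (sQ s) = Some s -> forall t, (lam (sq (sQ s)) : S -> int) t = Posz (2 * (s == t))%N.
Proof.
move=> hs t; rewrite /sq lam_hom lam_e /= /fl hs.
have -> : (Some s == Some t) = (s == t) by apply/eqP/eqP => [[]|->].
by case: (s == t).
Qed.

Lemma lam_Pl l c : (forall s, s \in l -> rho (sQ s) = Some s) ->
  forall t, (lam (Pl l c) : S -> int) t = Posz (2 * c t * count_mem t l)%N.
Proof.
elim: l => [|s l IH] h t /=; first by rewrite (hom1 lam_hom) muln0.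
rewrite lam_hom /= (hom_pow lam_hom) zfun_pow lam_sq ?h ?mem_head //.
rewrite IH; last by move=> u hu; apply: h; rewrite in_cons hu orbT.
case: (s =P t) => [->|ne] /=; rewrite ?eqxx /=.
- lia.
- lia.
Qed.

Definition L := [seq s <- enum S | rho (sQ s) == Some s].
Lemma L_uniq : uniq L.
Proof. by rewrite filter_uniq // enum_uniq. Qed.
Lemma L_rep s : s \in L -> rho (sQ s) = Some s.
Proof. by rewrite mem_filter => /andP [/eqP]. Qed.
Lemma L_mem s : rho (sQ s) = Some s -> s \in L.
Proof. by move=> h; rewrite mem_filter h eqxx mem_enum. Qed.

Definition NN (a : A) := exists c d, a = Pl L c ** ginv (Pl L d).
Lemma NN1 : NN gone.
Proof. exists (fun _ => 0), (fun _ => 0). by rewrite mulgV. Qed.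
Lemma NNM a b : NN a -> NN b -> NN (a ** b).
Proof.
move=> [c [d ->]] [c' [d' ->]].
exists (fun s => c s + c' s), (fun s => d s + d' s).
rewrite !PlD invM.
rewrite -gmulA (central_inv (Pl_central L d)) !gmulA //.
Qed.
Lemma NNV a : NN a -> NN (ginv a).
Proof. move=> [c [d ->]]; exists d, c. by rewrite invM invK. Qed.
Lemma NNc n g : NN n -> n ** g = g ** n.
Proof.
move=> [c [d ->]]; apply: central_mul; [exact: Pl_central | apply: central_inv; exact: Pl_central].
Qed.
Lemma sq_NN x : NN (sq x).
Proof.
have [r [hr _]] := rho_some x.
exists (fun s => nat_of_bool (s == r)), (fun _ => 0).
rewrite Pl0 inv1 mulg1 Pl_delta ?L_uniq ?(sq_rho hr) //.
apply: L_mem; exact: rho_rep hr.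
Qed.

Lemma NN_trivial a : NN a -> lam a = gone -> a = gone.
Proof.
move=> [c [d ->]] h0.
have hcd : forall t, t \in L -> c t = d t.
  move=> t ht.
  have := f_equal (fun f : zfun S => (f : S -> int) t) h0.
  rewrite lam_hom (homV lam_hom) /= !lam_Pl; try exact: L_rep.
  rewrite count_uniq_mem ?L_uniq // ht /=. lia.
by rewrite (Pl_ext hcd) mulgV.
Qed.

Definition H := quot NN1 NNM NNV NNc.
Definition ebar (x : Q) : H := cls NN (e x).

Lemma ebar_sq x : ebar x ** ebar x = gone.
Proof. rewrite /ebar -(cls_hom NN1 NNM NNV NNc). apply: clsN; exact: sq_NN. Qed.
Lemma ebar_inv x : ginv (ebar x) = ebar x.
Proof. by symmetry; apply: inv_right; apply: ebar_sq. Qed.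
Lemma ebar_conj x y : ebar y ** ebar x ** ebar y = ebar (qstar x y).
Proof.
rewrite /ebar -econj !(cls_hom NN1 NNM NNV NNc) (homV (cls_hom NN1 NNM NNV NNc)).
by rewrite -/(ebar y) ebar_inv.
Qed.
Lemma ebar_rels : adjoint_rels ebar.
Proof.
move=> x y z hz; have -> : z = qstar x y by apply: QW_eq.
by rewrite ebar_inv ebar_conj.
Qed.

Lemma palin j : forall x y : Q, exists z : Q,
  pr z = gpow (pr x ** pr y) j ** pr x /\ gpow (ebar x ** ebar y) j ** ebar x = ebar z.
Proof.
elim: j => [|j IH] x y.
- by exists x; split; [symmetry; apply: gmul1 | apply: gmul1].
- have [z [hz1 hz2]] := IH y x.
  exists (qstar z x); split.
  + rewrite /= hz1 !gmulA pow_swap.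
    rewrite -[pr x ** pr y ** gpow (pr x ** pr y) j]/(gpow (pr x ** pr y) j.+1) gpowS_r.
    by rewrite !gmulA.
  + rewrite -ebar_conj -hz2.
    change (gpow (ebar x ** ebar y) j.+1) with ((ebar x ** ebar y) ** gpow (ebar x ** ebar y) j).
    by rewrite -(gmulA (ebar x)) pow_swap !gmulA.
Qed.

Lemma ebar_rels_cox : coxeter_rels m (fun s => ebar (sQ s)).
Proof.
move=> s t [|j] hk //.
case: HW => _ [Hrel _]; have hW := Hrel s t j.+1 hk.
rewrite gpowS_r gmulA.
have [z [hz1 hz2]] := palin j (sQ s) (sQ t).
rewrite hz2.
have -> : z = sQ t.
  apply: QW_eq; rewrite hz1 /=. rewrite gpowS_r gmulA in hW.
  by rewrite (inv_left hW) sinvV.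
exact: ebar_sq.
Qed.

Definition sig_ex := proj2 (proj2 HW) H (fun s => ebar (sQ s)) ebar_rels_cox.
Definition sigma : W -> H := proj1_sig (constructive_indefinite_description _ sig_ex).
Lemma sigma_hom : is_hom sigma.
Proof. rewrite /sigma; case: constructive_indefinite_description => h [hh _] //. Qed.
Lemma sigma_s s : sigma (sgen s) = ebar (sQ s).
Proof. rewrite /sigma; case: constructive_indefinite_description => h [_ [he _]] //. Qed.

Lemma sigma_conj w : gen_by sgen w -> forall y z : Q, pr z = ginv w ** pr y ** w ->
  ginv (sigma w) ** ebar y ** sigma w = ebar z.
Proof.
elim=> [|i a _ IH|i a _ IH] y z hz.
- rewrite inv1 gmul1 mulg1 in hz; rewrite (QW_eq hz) (hom1 sigma_hom) inv1 gmul1 mulg1 //.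
- rewrite sigma_hom sigma_s invM ebar_inv -(IH (qstar y (sQ i)) z).
  + by rewrite -ebar_conj !gmulA.
  + by rewrite hz /= invM sinvV !gmulA.
- rewrite sinvV in hz *.
  rewrite sigma_hom sigma_s invM ebar_inv -(IH (qstar y (sQ i)) z).
  + by rewrite -ebar_conj !gmulA.
  + by rewrite hz /= invM sinvV !gmulA.
Qed.

Lemma sigma_e x : sigma (pr x) = ebar x.
Proof.
case: (proj2_sig x) => w [s hx].
rewrite hx !sigma_hom (homV sigma_hom) sigma_s.
exact: sigma_conj (genW w) (sQ s) x hx.
Qed.

Lemma pi_sigma a : cls NN a = sigma (phi a).
Proof.
have [h [_ [_ hu]]] := proj2 HA H ebar ebar_rels.
rewrite (hu (cls NN) (cls_hom NN1 NNM NNV NNc) (fun x => erefl)).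
rewrite (hu (fun a => sigma (phi a))) //.
- by move=> x y; rewrite Hphi sigma_hom.
- by move=> x; rewrite Hpe sigma_e.
Qed.

Lemma main_inj a b : in_commutator a -> in_commutator b -> phi a = phi b -> a = b.
Proof.
move=> ha hb hab.
have hc : cls NN a = cls NN b by rewrite !pi_sigma hab.
have hN := cls_eqP NN1 hc.
have := NN_trivial hN.
rewrite lam_hom (homV lam_hom) (lam_comm ha) (lam_comm hb) inv1 gmul1 => /(_ erefl) h.
by rewrite (inv_right h) invK.
Qed.

Lemma phi_surj w : exists a, phi a = w.
Proof.
elim: (genW w) => [|i a _ [a' ha]|i a _ [a' ha]].
- by exists gone; apply: (hom1 Hphi).
- exists (e (sQ i) ** a'); by rewrite Hphi Hpe ha.
- exists (ginv (e (sQ i)) ** a'); by rewrite Hphi (homV Hphi) Hpe ha.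
Qed.

Lemma phi_comm a : in_commutator a -> in_commutator (phi a).
Proof.
elim=> [|x y g _ IH]; first by rewrite (hom1 Hphi); apply: comm_one.
rewrite Hphi /gcomm !Hphi !(homV Hphi); exact: comm_mul.
Qed.

Lemma main_surj w : in_commutator w <-> exists a, in_commutator a /\ phi a = w.
Proof.
split.
- elim=> [|x y g _ [g' [hg' hg]]].
  + by exists gone; split; [apply: comm_one | apply: (hom1 Hphi)].
  + have [x' hx] := phi_surj x; have [y' hy] := phi_surj y.
    exists (gcomm x' y' ** g'); split; first exact: comm_mul.
    by rewrite Hphi /gcomm !Hphi !(homV Hphi) hx hy hg.
- by move=> [a [ha <-]]; apply: phi_comm.
Qed.

End Main.

Theorem theorem5p1 (S : finType) (m : S -> S -> option nat) (W : group)
  (sgen : S -> W) (A : group) (e : QW sgen -> A) (phi : A -> W) :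
  is_coxeter_group m sgen ->
  is_adjoint_group e ->
  is_hom phi -> (forall x : QW sgen, phi (e x) = proj1_sig x) ->
  (forall a b : A, in_commutator a -> in_commutator b -> phi a = phi b -> a = b) /\
  (forall w : W, in_commutator w <-> exists a : A, in_commutator a /\ phi a = w).
Proof.
move=> HW HA Hphi Hpe; split.
- exact: main_inj HW HA Hphi Hpe.
- move=> w; eapply main_surj; eassumption.
Qed.
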